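(* The fundamental group $\pi_1(\mathrm{Conf}^{lf}_\infty(\mathbb C),\widetilde{\mathbb N})$ is uncountable.
   Context: $\mathrm{Conf}^{lf}_\infty(\mathbb C)$ is the set of sequences $(x_j)_{j\ge1}$ of pairwise distinct complex numbers such that $\{j:|x_j|\le R\}$ is finite for all $R>0$, with metric $d_{\Sigma}(x,y)=\sum_j2^{-j}\min\{|x_j-y_j|,1\}+d_{\mathcal V}(P(x),P(y))$, where $P(x)=\{x_j\}$ and $d_{\mathcal V}$ is the vague metric $d_{\mathcal V}(A,B)=\sum_j 2^{-j}\frac{|\sum_{a\in A}\varphi_j(a)-\sum_{b\in B}\varphi_j(b)|}{1+|\sum_{a\in A}\varphi_j(a)-\sum_{b\in B}\varphi_j(b)|}$ for a fixed sequence $(\varphi_j)$ of compactly supported continuous real functions such that for each $m$ those supported in $\{|z|\le m\}$ are sup-norm dense among such functions supported in $\{|z|\le m\}$. $\widetilde{\mathbb N}=(1,2,3,\dots)$. *)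

(* Defs.v *)
From HB Require Import structures.
From mathcomp Require Import all_boot all_order all_algebra.
From mathcomp Require Import all_classical all_reals.
From mathcomp Require Import topology normedtype sequences.
Import numFieldNormedType.Exports.
Set Implicit Arguments. Unset Strict Implicit. Unset Printing Implicit Defensive.
Import Order.TTheory GRing.Theory Num.Theory.
Local Open Scope classical_set_scope.
Local Open Scope ring_scope.

(* The complex plane C, as R^2 = R * R (real part, imaginary part). *)
Notation Cpt R := (R * R)%type.

Section Conf.
Variable R : realType.
Local Notation Cpt := (Cpt R).
Definition csub (z w : Cpt) : Cpt := (z.1 - w.1, z.2 - w.2).
Definition cabs (z : Cpt) : R := Num.sqrt (z.1 ^+ 2 + z.2 ^+ 2).

(* Sequences are indexed from 0: x j here is x_{j+1} of the paper. *)
Definition Seq := nat -> Cpt.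

Definition Pset (x : Seq) : set Cpt := range x.

Definition conf (x : Seq) : Prop :=
  (forall i j : nat, i <> j -> x i <> x j) /\
  (forall r : R, 0 < r -> finite_set [set j : nat | cabs (x j) <= r]).

Definition supported_in (m : R) (f : Cpt -> R) : Prop :=
  forall z, m < cabs z -> f z = 0.
Definition Cc (f : Cpt -> R) : Prop :=
  continuous f /\ exists m : R, supported_in m f.

Definition good_test_seq (phi : nat -> Cpt -> R) : Prop :=
  (forall j, Cc (phi j)) /\
  (forall (m : nat) (f : Cpt -> R), continuous f -> supported_in m%:R f ->
     forall eps : R, 0 < eps ->
       exists j, supported_in m%:R (phi j) /\
                 forall z, `|f z - phi j z| <= eps).

Definition rseries (u : nat -> R) : R := limn (fun n => \sum_(0 <= j < n) u j).

(* weight 2^{-j} for the paper's index j = our j + 1 *)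
Definition w (j : nat) : R := 2 ^- j.+1.

Definition psum (phi : Cpt -> R) (A : set Cpt) : R := \sum_(a \in A) phi a.

Definition dV (phi : nat -> Cpt -> R) (A B : set Cpt) : R :=
  rseries (fun j =>
    let t := `|psum (phi j) A - psum (phi j) B| in w j * (t / (1 + t))).

Definition dSigma (phi : nat -> Cpt -> R) (x y : Seq) : R :=
  rseries (fun j => w j * Num.min (cabs (csub (x j) (y j))) 1)
  + dV phi (Pset x) (Pset y).

Definition Ntilde : Seq := fun j => (j.+1%:R, 0).

Definition unitI (t : R) : Prop := 0 <= t <= 1.

Definition loop (phi : nat -> Cpt -> R) (b : Seq) (g : R -> Seq) : Prop :=
  (forall t, unitI t -> conf (g t)) /\
  (forall t, unitI t -> forall e : R, 0 < e -> exists2 d : R, 0 < d &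
     forall s, unitI s -> `|s - t| < d -> dSigma phi (g s) (g t) < e) /\
  g 0 = b /\ g 1 = b.

Definition loop_homotopic (phi : nat -> Cpt -> R) (b : Seq) (g h : R -> Seq) : Prop :=
  exists H : R -> R -> Seq,
    (forall s t, unitI s -> unitI t -> conf (H s t)) /\
    (forall s t, unitI s -> unitI t -> forall e : R, 0 < e -> exists2 d : R, 0 < d &
       forall s' t', unitI s' -> unitI t' -> `|s' - s| < d -> `|t' - t| < d ->
         dSigma phi (H s' t') (H s t) < e) /\
    (forall t, unitI t -> H 0 t = g t) /\
    (forall t, unitI t -> H 1 t = h t) /\
    (forall s, unitI s -> H s 0 = b /\ H s 1 = b).

Definition pi1 (phi : nat -> Cpt -> R) (b : Seq) : set (set (R -> Seq)) :=
  [set [set h | loop phi b h /\ loop_homotopic phi b g h] | g in loop phi b].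

End Conf.

(* Main.v *)
Require Import Defs.
From HB Require Import structures.
From mathcomp Require Import all_boot all_order all_algebra.
From mathcomp Require Import all_classical all_reals.
From mathcomp Require Import topology normedtype sequences trigo.
From mathcomp Require Import ring lra zify.
Import numFieldNormedType.Exports.
Set Implicit Arguments. Unset Strict Implicit. Unset Printing Implicit Defensive.
Import Order.TTheory GRing.Theory Num.Theory.
Local Open Scope classical_set_scope.
Local Open Scope ring_scope.


Section SeriesA.
Context {R : realType}.

Lemma w_ge0 j : 0 <= (w R j).
Proof. by rewrite /w invr_ge0 exprn_ge0. Qed.

Lemma w_le1 j : (w R j) <= 1.
Proof. by rewrite /w invf_le1 ?exprn_gt0 ?exprn_ege1 ?ler1n ?ltr0n. Qed.

Lemma sum_w J n : (J <= n)%N -> \sum_(J <= j < n) (w R j) = 2^-J - 2^-n.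
Proof.
elim: n => [|n IH] Jn.
  by move: Jn; rewrite leqn0 => /eqP ->; rewrite big_geq // subrr.
move: Jn; rewrite leq_eqVlt => /orP[/eqP ->|Jn]; first by rewrite big_geq // subrr.
rewrite ltnS in Jn; rewrite big_nat_recr //= IH // /w.
have e : (2:R)^-n.+1 = 2^-n / 2 by rewrite exprS invfM mulrC.
rewrite e; lra.
Qed.

Lemma partial_le (u : nat -> R) : (forall j, 0 <= u j <= w R j) -> forall J n,
  \sum_(0 <= j < n) u j <= \sum_(0 <= j < J) u j + 2^-J.
Proof.
move=> hu J n.
have pos : forall j, 0 <= u j by move=> j; case/andP: (hu j).
case: (leqP n J) => nJ.
  rewrite (big_cat_nat (leq0n n) nJ) /= -addrA lerDl addr_ge0 //.
    by apply: sumr_ge0 => j _; exact: pos.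
  by rewrite invr_ge0 exprn_ge0.
rewrite (big_cat_nat (leq0n J) (ltnW nJ)) /= lerD2l.
apply: (le_trans (y := \sum_(J <= j < n) w R j)).
  by apply: ler_sum => j _; case/andP: (hu j).
rewrite sum_w ?(ltnW nJ) // lerBlDr lerDl invr_ge0 exprn_ge0 //.
Qed.

Lemma rseries_cvg (u : nat -> R) : (forall j, 0 <= u j <= w R j) ->
  cvgn (fun n => \sum_(0 <= j < n) u j).
Proof.
move=> hu; apply: nondecreasing_is_cvgn.
  move=> m n mn; rewrite (big_cat_nat (leq0n m) mn) /= lerDl.
  by apply: sumr_ge0 => j _; case/andP: (hu j).
exists (\sum_(0 <= j < 0) u j + 2^-0) => _ [n _ <-].
exact: partial_le.
Qed.

Lemma rseries_ge (u : nat -> R) : (forall j, 0 <= u j <= w R j) -> forall n,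
  \sum_(0 <= j < n) u j <= rseries u.
Proof.
move=> hu n; apply: (nondecreasing_cvgn_le (u_ := fun n => \sum_(0 <= j < n) u j)).
  move=> a b ab; rewrite (big_cat_nat (leq0n a) ab) /= lerDl.
  by apply: sumr_ge0 => j _; case/andP: (hu j).
exact: rseries_cvg.
Qed.

Lemma rseries_le (u : nat -> R) : (forall j, 0 <= u j <= w R j) -> forall J,
  rseries u <= \sum_(0 <= j < J) u j + 2^-J.
Proof.
move=> hu J; apply: limr_le; first exact: rseries_cvg.
by apply: nearW => n; exact: partial_le.
Qed.

Lemma cabs_ge0 (z : Cpt R) : 0 <= cabs z.
Proof. exact: sqrtr_ge0. Qed.

Lemma ct_bound (x y : Seq R) j :
  0 <= w R j * Num.min (cabs (csub (x j) (y j))) 1 <= w R j.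
Proof.
apply/andP; split.
  by rewrite mulr_ge0 ?w_ge0 // le_min cabs_ge0 ler01.
by rewrite ler_piMr ?w_ge0 // ge_min lexx orbT.
Qed.

Lemma vt_bound (t : R) j : 0 <= t -> 0 <= w R j * (t / (1 + t)) <= w R j.
Proof.
move=> t0; have h : 0 < 1 + t by lra.
apply/andP; split; first by rewrite mulr_ge0 ?w_ge0 // divr_ge0 // ltW.
by rewrite ler_piMr ?w_ge0 // ler_pdivrMr // mul1r; lra.
Qed.

Lemma dV_ge0 (phi : nat -> Cpt R -> R) A B : 0 <= dV phi A B.
Proof.
rewrite /dV; apply: (le_trans _ (rseries_ge _ 0)); first by rewrite big_geq.
by move=> j /=; apply: vt_bound.
Qed.

Lemma dSigma_coord_le (phi : nat -> Cpt R -> R) (x y : Seq R) i :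
  w R i * Num.min (cabs (csub (x i) (y i))) 1 <= dSigma phi x y.
Proof.
rewrite /dSigma.
have h1 := dV_ge0 phi (Pset x) (Pset y).
have h2 := rseries_ge (fun j => ct_bound x y j) i.+1.
rewrite big_nat_recr //= in h2.
have h3 : 0 <= \sum_(0 <= j < i) w R j * Num.min (cabs (csub (x j) (y j))) 1.
  by apply: sumr_ge0 => j _; case/andP: (ct_bound x y j).
lra.
Qed.

Lemma dSigma_ub (phi : nat -> Cpt R -> R) (x y : Seq R) J :
  dSigma phi x y <= \sum_(0 <= j < J) cabs (csub (x j) (y j)) +
     \sum_(0 <= j < J) `|psum (phi j) (Pset x) - psum (phi j) (Pset y)| +
     2 * 2^-J.
Proof.
rewrite /dSigma /dV.
have e1 := rseries_le (fun j => ct_bound x y j) J.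
have e2 := rseries_le (fun j => vt_bound j (normr_ge0
   (psum (phi j) (Pset x) - psum (phi j) (Pset y)))) J.
have s1 : \sum_(0 <= j < J) w R j * Num.min (cabs (csub (x j) (y j))) 1
   <= \sum_(0 <= j < J) cabs (csub (x j) (y j)).
  apply: ler_sum => j _; apply: (le_trans (y := Num.min (cabs (csub (x j) (y j))) 1)).
    by rewrite ler_piMl ?w_le1 // le_min cabs_ge0 ler01.
  by rewrite ge_min lexx.
set T := fun j => `|psum (phi j) (Pset x) - psum (phi j) (Pset y)|.
have s2 : \sum_(0 <= j < J) w R j * (T j / (1 + T j)) <= \sum_(0 <= j < J) T j.
  apply: ler_sum => j _; have t0 : 0 <= T j by exact: normr_ge0.
  have h : 0 < 1 + T j by lra.
  apply: (le_trans (y := T j / (1 + T j))).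
    by rewrite ler_piMl ?w_le1 // divr_ge0 // ltW.
  by rewrite ler_pdivrMr // ler_peMr //; lra.
have := e2; rewrite -/T => e2'.
lra.
Qed.

End SeriesA.


Section Wind.
Context {R : realType}.
Implicit Types a b c : Cpt R.

Definition cross a b : R := a.1 * b.2 - a.2 * b.1.
Definition dot a b : R := a.1 * b.1 + a.2 * b.2.
Definition near2 a b : Prop := `|cross a b| < dot a b.
Definition delta a b : R := atan (cross a b / dot a b).

Lemma delta_aa a : delta a a = 0.
Proof. by rewrite /delta (_ : cross a a = 0) ?mul0r ?atan0 // /cross; ring. Qed.

Lemma atan_lt_pi4 (u : R) : `|u| < 1 -> `|atan u| < pi / 4%:R.
Proof.
move=> hu; rewrite ltr_norml; move: hu; rewrite ltr_norml => /andP[h1 h2].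
apply/andP; split.
  by rewrite -atan1 -atanN; apply: lt_atan.
by rewrite -atan1; apply: lt_atan.
Qed.

Lemma cos_atan_neq0 (u : R) : cos (atan u) != 0.
Proof.
by apply: lt0r_neq0; apply: cos_gt0_pihalf; rewrite atan_gtNpi2 atan_ltpi2.
Qed.

Lemma delta_cocycle a b c : near2 a b -> near2 b c ->
  delta a c = delta a b + delta b c.
Proof.
rewrite /near2 /delta => hab hbc.
set P := dot a b; set Q := cross a b; set P' := dot b c; set Q' := cross b c.
have P0 : 0 < P by apply: le_lt_trans hab.
have P'0 : 0 < P' by apply: le_lt_trans hbc.
have hu : `|Q / P| < 1 by rewrite normrM normfV (gtr0_norm P0) ltr_pdivrMr // mul1r.
have hv : `|Q' / P'| < 1 by rewrite normrM normfV (gtr0_norm P'0) ltr_pdivrMr // mul1r.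
have hx := atan_lt_pi4 hu; have hy := atan_lt_pi4 hv.
have pi0 : 0 < pi :> R := pi_gt0 R.
set X := atan (Q / P) + atan (Q' / P').
have hX : X \in `](- (pi / 2)), (pi / 2)[.
  rewrite in_itv /=; move: hx hy; rewrite !ltr_norml => /andP[x1 x2] /andP[y1 y2].
  apply/andP; split; rewrite /X; lra.
have tX : tan X = (Q / P + Q' / P') / (1 - Q / P * (Q' / P')).
  by rewrite /X tanD ?cos_atan_neq0 // !atanK.
have nb : 0 < b.1 ^+ 2 + b.2 ^+ 2.
  rewrite lt0r addr_ge0 ?sqr_ge0 // andbT; apply/eqP => hb.
  have : b.1 = 0 /\ b.2 = 0.
    have h1 := sqr_ge0 b.1; have h2 := sqr_ge0 b.2.
    by split; apply/eqP; rewrite -sqrf_eq0; apply/eqP; lra.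
  case=> b1 b2; move: P0; rewrite /P /dot b1 b2; lra.
have eq1 : Q * P' + Q' * P = (b.1 ^+ 2 + b.2 ^+ 2) * cross a c.
  by rewrite /Q /P' /Q' /P /cross /dot; ring.
have eq2 : P * P' - Q * Q' = (b.1 ^+ 2 + b.2 ^+ 2) * dot a c.
  by rewrite /Q /P' /Q' /P /cross /dot; ring.
have D0 : 0 < P * P' - Q * Q'.
  have := ler_norm Q; have := ler_norm Q'; have := normr_ge0 Q; have := normr_ge0 Q'.
  move: hab hbc; rewrite -/Q -/Q' => hab' hbc' *.
  have : `|Q| * `|Q'| < P * P' by apply: ltr_pM.
  rewrite -normrM => h; have := ler_norm (Q * Q'); lra.
have e : cross a c / dot a c = (Q / P + Q' / P') / (1 - Q / P * (Q' / P')).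
  have nbn : b.1 ^+ 2 + b.2 ^+ 2 != 0 by rewrite gt_eqF.
  have dac : dot a c != 0.
    apply/eqP => h; move: eq2; rewrite h mulr0 => h'; lra.
  have K0 : 1 - Q / P * (Q' / P') = (P * P' - Q * Q') / (P * P').
    by field; rewrite !gt_eqF.
  have : (Q / P + Q' / P') / (1 - Q / P * (Q' / P')) = (Q * P' + Q' * P) / (P * P' - Q * Q').
    by rewrite K0; field; rewrite !gt_eqF.
  move=> ->; rewrite eq1 eq2; field; apply/andP; split => //.
rewrite e -tX tanK //.
Qed.


Lemma delta_anti a b : delta b a = - delta a b.
Proof.
rewrite /delta.
have -> : cross b a = - cross a b by rewrite /cross; ring.
have -> : dot b a = dot a b by rewrite /dot; ring.
by rewrite mulNr atanN.
Qed.

Lemma delta_le0 a b : cross a b <= 0 -> 0 < dot a b -> delta a b <= 0.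
Proof.
move=> c0 d0; rewrite /delta -atan0; apply: le_atan.
by rewrite pmulr_lle0 // invr_gt0.
Qed.

Lemma delta_lt0 a b : cross a b < 0 -> 0 < dot a b -> delta a b < 0.
Proof.
move=> c0 d0; rewrite /delta -atan0; apply: lt_atan.
by rewrite pmulr_llt0 // invr_gt0.
Qed.

Lemma grid (F : nat -> nat -> Cpt R) (N : nat) c0 c1 :
  (forall i j, (i < N)%N -> (j <= N)%N -> near2 (F i j) (F i.+1 j)) ->
  (forall i j, (i <= N)%N -> (j < N)%N -> near2 (F i j) (F i j.+1)) ->
  (forall i, (i <= N)%N -> F i 0%N = c0 /\ F i N = c1) ->
  \sum_(0 <= j < N) delta (F 0%N j) (F 0%N j.+1) =
  \sum_(0 <= j < N) delta (F N j) (F N j.+1).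
Proof.
move=> hv hh hc.
suff : forall i, (i <= N)%N ->
  \sum_(0 <= j < N) delta (F i j) (F i j.+1) = \sum_(0 <= j < N) delta (F 0%N j) (F 0%N j.+1).
  by move=> /(_ N (leqnn N)) ->.
elim=> [//|i IH] iN.
rewrite -IH ?(ltnW iN) //.
pose V j := delta (F i j) (F i.+1 j).
have cell : forall j, (j < N)%N ->
  delta (F i.+1 j) (F i.+1 j.+1) = delta (F i j) (F i j.+1) + (V j.+1 - V j).
  move=> j jN.
  have e1 := delta_cocycle (hh i j (ltnW iN) jN) (hv i j.+1 iN jN).
  have e2 := delta_cocycle (hv i j iN (ltnW jN)) (hh i.+1 j iN jN).
  rewrite /V; lra.
rewrite (eq_big_nat _ _ (F2 := fun j => delta (F i j) (F i j.+1) + (V j.+1 - V j))); last first.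
  by move=> j /andP[_ jN]; exact: cell.
rewrite big_split /= telescope_sumr // /V.
have [h0 hN] := hc i (ltnW iN); have [h0' hN'] := hc i.+1 iN.
by rewrite h0 hN h0' hN' !delta_aa subrr addr0.
Qed.

End Wind.


Section Leb.
Context {R : realType}.
HB.instance Definition _ := isPointed.Build (R * R)%type (0, 0).

Lemma ballR (x e y : R) : ball x e y <-> `|x - y| < e.
Proof. by rewrite -ball_normE. Qed.

Lemma ballRR (p q : R * R) e : ball p e q <-> ball p.1 e q.1 /\ ball p.2 e q.2.
Proof. by []. Qed.

Lemma fin_min (T : eqType) (r : T -> R) (s : seq T) :
  (forall q, q \in s -> 0 < r q) -> exists2 d, 0 < d & forall q, q \in s -> d <= r q.
Proof.
elim: s => [|a s IH] h; first by exists 1.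
have [d d0 hd] : exists2 d, 0 < d & forall q, q \in s -> d <= r q.
  by apply: IH => q qs; apply: h; rewrite inE qs orbT.
exists (Num.min d (r a)).
  by rewrite lt_min d0 h // inE eqxx.
move=> q; rewrite inE => /orP[/eqP ->|qs]; first by rewrite ge_min lexx orbT.
by rewrite ge_min hd.
Qed.


Definition sq : set (R * R) := `[0, 1]%classic `*` `[0, 1]%classic.

Lemma sqP (p : R * R) : sq p <-> unitI p.1 /\ unitI p.2.
Proof. by rewrite /sq /= /unitI !in_itv. Qed.

Lemma lebesgue (P : R -> R -> R -> R -> Prop) :
  (forall s t, unitI s -> unitI t -> exists2 r, 0 < r &
     forall s1 t1 s2 t2, unitI s1 -> unitI t1 -> unitI s2 -> unitI t2 ->
       `|s1 - s| < r -> `|t1 - t| < r -> `|s2 - s| < r -> `|t2 - t| < r ->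
       P s1 t1 s2 t2) ->
  exists2 d, 0 < d & forall s1 t1 s2 t2, unitI s1 -> unitI t1 -> unitI s2 -> unitI t2 ->
       `|s1 - s2| < d -> `|t1 - t2| < d -> P s1 t1 s2 t2.
Proof.
move=> H.
pose G (p : R * R) (r : R) := forall s1 t1 s2 t2, unitI s1 -> unitI t1 -> unitI s2 -> unitI t2 ->
       `|s1 - p.1| < r -> `|t1 - p.2| < r -> `|s2 - p.1| < r -> `|t2 - p.2| < r ->
       P s1 t1 s2 t2.
have H' : forall p : R * R, exists r : R, 0 < r /\ (sq p -> G p r).
  move=> p; case: (pselect (sq p)) => [/sqP [h1 h2]|np].
    by have [r r0 hr] := H _ _ h1 h2; exists r; split.
  by exists 1; split => //.
have [r hr] := choice H'.
have cpt : compact sq by apply: compact_setX; exact: segment_compact.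
move: cpt; rewrite compact_cover => /(_ _ sq (fun p => ball p (r p / 2))).
case.
- by move=> p _; exact: ball_open.
- move=> p sp; exists p => //; apply: ballxx.
  by have [r0 _] := hr p; lra.
move=> D' D'sq cov.
have [d d0 hd] := fin_min (r := fun p => r p / 2) (s := finmap.enum_fset D') (fun q _ => (ltac:(have [r0 _] := hr q; lra))).
exists d => // s1 t1 s2 t2 u1 v1 u2 v2 h1 h2.
have sp : sq (s1, t1) by apply/sqP.
have [q Dq] := cov _ sp.
move=> /ballRR [/= /ballR b1 /ballR b2].
have [r0 hG] := hr q.
have qsq : sq q by have := D'sq q Dq; rewrite inE.
have dq := hd q Dq.
apply: (hG qsq) => //.
- by rewrite distrC; lra.
- by rewrite distrC; lra.
- have := ler_distD s1 s2 q.1; rewrite (distrC s2 s1) (distrC s1 q.1) => h; lra.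
- have := ler_distD t1 t2 q.2; rewrite (distrC t2 t1) (distrC t1 q.2) => h; lra.
Qed.

End Leb.


Section HomNear.
Context {R : realType}.

Lemma near_pert_aux (a b e1 e2 e3 e4 S : R) : S = `|a| + `|b| -> 0 < S ->
  `|e1| <= S / 20 -> `|e2| <= S / 20 -> `|e3| <= S / 20 -> `|e4| <= S / 20 ->
  near2 (a + e1, b + e2) (a + e3, b + e4).
Proof.
move=> eS m0 h1 h2 h3 h4; rewrite /near2 /cross /dot /=.
have pr : forall x y : R, `|x| <= S -> `|y| <= S / 20 -> `|x * y| <= S ^+ 2 / 20.
  move=> x y hx hy; rewrite normrM (_ : S ^+ 2 / 20 = S * (S / 20)); last by rewrite expr2 mulrA.
  by rewrite ler_pM.
have pe : forall x y : R, `|x| <= S / 20 -> `|y| <= S / 20 -> `|x * y| <= S ^+ 2 / 400.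
  move=> x y hx hy; rewrite normrM (_ : S ^+ 2 / 400 = (S / 20) * (S / 20)); last by rewrite expr2; field.
  by rewrite ler_pM.
have aA : `|a| <= S by rewrite eS lerDl.
have bB : `|b| <= S by rewrite eS lerDr.
have q1 := pr _ _ aA h1; have q2 := pr _ _ aA h2; have q3 := pr _ _ aA h3; have q4 := pr _ _ aA h4.
have r1 := pr _ _ bB h1; have r2 := pr _ _ bB h2; have r3 := pr _ _ bB h3; have r4 := pr _ _ bB h4.
have s13 := pe _ _ h1 h3; have s24 := pe _ _ h2 h4; have s14 := pe _ _ h1 h4; have s23 := pe _ _ h2 h3.
have sq2 : S ^+ 2 <= 2 * (a * a + b * b).
  have ea : `|a| * `|a| = a * a by rewrite -normrM -expr2 ger0_norm ?sqr_ge0.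
  have eb : `|b| * `|b| = b * b by rewrite -normrM -expr2 ger0_norm ?sqr_ge0.
  have := sqr_ge0 (`|a| - `|b|); rewrite eS !expr2 -ea -eb => h; nra.
have S20 : 0 < S ^+ 2 by rewrite exprn_gt0.
rewrite ltr_norml; apply/andP; split.
  move: q1 q2 q3 q4 r1 r2 r3 r4 s13 s24 s14 s23; rewrite !ler_norml => /andP[? ?] /andP[? ?] /andP[? ?] /andP[? ?] /andP[? ?] /andP[? ?] /andP[? ?] /andP[? ?] /andP[? ?] /andP[? ?] /andP[? ?] /andP[? ?].
  rewrite !mulrDr !mulrDl; lra.
move: q1 q2 q3 q4 r1 r2 r3 r4 s13 s24 s14 s23; rewrite !ler_norml => /andP[? ?] /andP[? ?] /andP[? ?] /andP[? ?] /andP[? ?] /andP[? ?] /andP[? ?] /andP[? ?] /andP[? ?] /andP[? ?] /andP[? ?] /andP[? ?].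
rewrite !mulrDr !mulrDl; lra.
Qed.


Lemma coord_le (z : Cpt R) : `|z.1| <= cabs z /\ `|z.2| <= cabs z.
Proof.
rewrite /cabs; split; rewrite -sqrtr_sqr; apply: ler_wsqrtr.
  by rewrite lerDl sqr_ge0.
by rewrite lerDr sqr_ge0.
Qed.

Lemma w_gt0 j : 0 < w R j.
Proof. by rewrite /w invr_gt0 exprn_gt0. Qed.

Lemma from_dSigma (phi : nat -> Cpt R -> R) (x y : Seq R) i (eta : R) : 0 < eta ->
  dSigma phi x y < w R i * Num.min eta 1 -> cabs (csub (x i) (y i)) < eta.
Proof.
move=> e0 h; have := dSigma_coord_le phi x y i => h2.
have h3 : w R i * Num.min (cabs (csub (x i) (y i))) 1 < w R i * Num.min eta 1 by apply: le_lt_trans h.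
rewrite ltr_pM2l ?w_gt0 // in h3.
rewrite ltNge; apply/negP => hle; move: h3; rewrite ltNge => /negP; apply.
by rewrite le_min !ge_min hle lexx orbT.
Qed.


Lemma hom_near (phi : nat -> Cpt R -> R) (H : R -> R -> Seq R) (p q : nat) :
 (forall s t, unitI s -> unitI t -> H s t p <> H s t q) ->
 (forall s t, unitI s -> unitI t -> forall e : R, 0 < e -> exists2 d : R, 0 < d &
    forall s' t', unitI s' -> unitI t' -> `|s' - s| < d -> `|t' - t| < d ->
      dSigma phi (H s' t') (H s t) < e) ->
 exists2 d : R, 0 < d & forall s1 t1 s2 t2, unitI s1 -> unitI t1 -> unitI s2 -> unitI t2 ->
   `|s1 - s2| < d -> `|t1 - t2| < d ->
   near2 (csub (H s1 t1 p) (H s1 t1 q)) (csub (H s2 t2 p) (H s2 t2 q)).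
Proof.
move=> hne hc; apply: lebesgue => s t us ut.
set D := csub (H s t p) (H s t q).
have S0 : 0 < `|D.1| + `|D.2|.
  rewrite lt_def addr_ge0 // andbT; apply/negP => /eqP h.
  have h1 : `|D.1| = 0 by have := normr_ge0 D.1; have := normr_ge0 D.2; lra.
  have h2 : `|D.2| = 0 by have := normr_ge0 D.1; have := normr_ge0 D.2; lra.
  move/eqP: h1; rewrite normr_eq0 /D /csub /= subr_eq0 => /eqP e1.
  move/eqP: h2; rewrite normr_eq0 /D /csub /= subr_eq0 => /eqP e2.
  by apply: (hne s t us ut); rewrite [LHS]surjective_pairing [RHS]surjective_pairing e1 e2.
set S := `|D.1| + `|D.2| in S0.
set eta := S / 40.
have eta0 : 0 < eta by rewrite /eta divr_gt0.
set e := Num.min (w R p * Num.min eta 1) (w R q * Num.min eta 1).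
have e0 : 0 < e by rewrite lt_min !mulr_gt0 ?w_gt0 // lt_min eta0 ltr01.
have [d d0 hd] := hc s t us ut e e0.
exists d => // s1 t1 s2 t2 u1 v1 u2 v2 a1 b1 a2 b2.
have k1 := hd _ _ u1 v1 a1 b1; have k2 := hd _ _ u2 v2 a2 b2.
have P1 : cabs (csub (H s1 t1 p) (H s t p)) < eta.
  by apply: (from_dSigma eta0); apply: lt_le_trans k1 _; rewrite ge_min lexx.
have Q1 : cabs (csub (H s1 t1 q) (H s t q)) < eta.
  by apply: (from_dSigma eta0); apply: lt_le_trans k1 _; rewrite ge_min lexx orbT.
have P2 : cabs (csub (H s2 t2 p) (H s t p)) < eta.
  by apply: (from_dSigma eta0); apply: lt_le_trans k2 _; rewrite ge_min lexx.
have Q2 : cabs (csub (H s2 t2 q) (H s t q)) < eta.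
  by apply: (from_dSigma eta0); apply: lt_le_trans k2 _; rewrite ge_min lexx orbT.
have [P1a P1b] := coord_le (csub (H s1 t1 p) (H s t p)).
have [Q1a Q1b] := coord_le (csub (H s1 t1 q) (H s t q)).
have [P2a P2b] := coord_le (csub (H s2 t2 p) (H s t p)).
have [Q2a Q2b] := coord_le (csub (H s2 t2 q) (H s t q)).
move: P1a P1b Q1a Q1b P2a P2b Q2a Q2b; rewrite /csub /= => P1a P1b Q1a Q1b P2a P2b Q2a Q2b.
set x1 := H s1 t1 p; set y1 := H s1 t1 q; set x2 := H s2 t2 p; set y2 := H s2 t2 q;
set x0 := H s t p; set y0 := H s t q.
have E1 : (x1.1 - y1.1, x1.2 - y1.2) = (D.1 + ((x1.1 - x0.1) - (y1.1 - y0.1)), D.2 + ((x1.2 - x0.2) - (y1.2 - y0.2))).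
  by rewrite /D /csub /= -/x0 -/y0; congr (_, _); ring.
have E2 : (x2.1 - y2.1, x2.2 - y2.2) = (D.1 + ((x2.1 - x0.1) - (y2.1 - y0.1)), D.2 + ((x2.2 - x0.2) - (y2.2 - y0.2))).
  by rewrite /D /csub /= -/x0 -/y0; congr (_, _); ring.
rewrite E1 E2; apply: (near_pert_aux (S := S)) => //.
- apply: le_trans (ler_normB _ _) _; move: P1a Q1a P1 Q1; rewrite /eta => *; lra.
- apply: le_trans (ler_normB _ _) _; move: P1b Q1b P1 Q1; rewrite /eta => *; lra.
- apply: le_trans (ler_normB _ _) _; move: P2a Q2a P2 Q2; rewrite /eta => *; lra.
- apply: le_trans (ler_normB _ _) _; move: P2b Q2b P2 Q2; rewrite /eta => *; lra.
Qed.

End HomNear.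


Section Path.
Context {R : realType}.

Definition Qp (u : R) : Cpt R :=
  if u <= 0 then (-1, 0)
  else if u <= 1/3 then (-1 + 9/2 * u, 3/2 * u)
  else if u <= 2/3 then (1/2, 1/2 - 3 * (u - 1/3))
  else if u <= 1 then (1/2 - 9/2 * (u - 2/3), -1/2 + 3/2 * (u - 2/3))
  else (-1, 0).

Ltac qcases u := rewrite /Qp; case: (leP u 0) => ?; [|case: (leP u (1/3)) => ?;
  [|case: (leP u (2/3)) => ?; [|case: (leP u 1) => ?]]] => /=.

Lemma Qp_bounds u : -1 <= (Qp u).1 <= 1/2 /\ -(1/2) <= (Qp u).2 <= 1/2.
Proof. qcases u; split; apply/andP; split; lra. Qed.

Lemma Qp_im0 u : (Qp u).2 = 0 -> (Qp u).1 = -1 \/ (Qp u).1 = 1/2.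
Proof. qcases u => h; try (left; lra); try (right; lra). Qed.

Lemma Qp_lip u v : u <= v ->
  `|(Qp u).1 - (Qp v).1| <= 5 * (v - u) /\ `|(Qp u).2 - (Qp v).2| <= 5 * (v - u).
Proof.
move=> uv; rewrite !ler_norml.
qcases u; qcases v; split; apply/andP; split; lra.
Qed.


Lemma Qp_cross u v : u <= v -> v <= u + 1/3 -> cross (Qp u) (Qp v) <= 0.
Proof.
move=> uv vu; rewrite /cross.
qcases u; qcases v; case: (leP u (2/9)) => ?; case: (leP u (5/9)) => ?; nra.
Qed.

End Path.


Section Constr.
Context {R : realType}.

Definition uk (k : nat) (t : R) : R := 2 ^+ k.+1 * (t - 1) + 2.
Definition mv (S : nat -> bool) (i : nat) : bool := (~~ odd i) && S i./2.
Definition gS (S : nat -> bool) (t : R) : Seq R := fun i =>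
  if mv S i then ((i.+2)%:R + (Qp (uk i./2 t)).1, (Qp (uk i./2 t)).2) else Ntilde R i.

Lemma Qp_le0 (u : R) : u <= 0 -> Qp u = (-1, 0).
Proof. by move=> h; rewrite /Qp h. Qed.

Lemma Qp_gt1 (u : R) : 1 < u -> Qp u = (-1, 0).
Proof.
move=> h; rewrite /Qp; case: (leP u 0) => ?; first by [].
case: (leP u (1/3)) => ?; first by exfalso; lra.
case: (leP u (2/3)) => ?; first by exfalso; lra.
by case: (leP u 1) => ?; first by exfalso; lra.
Qed.

Lemma natS2 i : (i.+2)%:R + (-1) = (i.+1)%:R :> R.
Proof. by rewrite -addn1 natrD; lra. Qed.

Lemma gS_Ntilde S t : (forall k, Qp (uk k t) = (-1, 0)) -> gS S t = Ntilde R.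
Proof.
move=> h; apply: funext => i; rewrite /gS; case: (mv S i) => //.
by rewrite h /= natS2.
Qed.

Lemma two_pow_ge2 k : 2 <= (2 : R) ^+ k.+1.
Proof.
rewrite exprS; have := exprn_ege1 k (ler1n R 2).
by move=> h; rewrite -{1}(mulr1 2) ler_pM2l.
Qed.

Lemma gS_0 S : gS S 0 = Ntilde R.
Proof.
apply: gS_Ntilde => k; apply: Qp_le0; rewrite /uk.
by have := two_pow_ge2 k; lra.
Qed.

Lemma gS_1 S : gS S 1 = Ntilde R.
Proof. by apply: gS_Ntilde => k; apply: Qp_gt1; rewrite /uk subrr mulr0 add0r; lra. Qed.

Lemma gS_re S t i : (i.+1)%:R <= (gS S t i).1 <= (i.+1)%:R + 3/2.
Proof.
rewrite /gS; case: (mv S i) => /=; last by rewrite lexx /=; lra.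
have [/andP[a b] _] := Qp_bounds (uk i./2 t).
have := natS2 i; rewrite -natS2 => _; apply/andP; split; have := natS2 i; lra.
Qed.


Lemma natr_add (n m : nat) : (n + m)%:R = n%:R + m%:R :> R.
Proof. exact: natrD. Qed.

Lemma gS_lt S t i j : (i < j)%N -> gS S t i <> gS S t j.
Proof.
move=> ij e.
have ri := gS_re S t i; have rj := gS_re S t j.
rewrite e in ri.
have ji : j = i.+1.
  case: (leqP j i.+1) => h; first by apply/eqP; rewrite eqn_leq h ij.
  have : (i.+3)%:R <= (j.+1)%:R :> R by rewrite ler_nat.
  rewrite (_ : (i.+3)%:R = (i.+1)%:R + 2 :> R); last by rewrite -addn2 natrD.
  move: ri rj => /andP[_ a] /andP[b _] c; exfalso; clear e; lra.
subst j.
move: e; rewrite /gS.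
case hi: (mv S i); case hj: (mv S i.+1).
- move: hi hj; rewrite /mv /= => /andP[h1 _] /andP[h2 _].
  by rewrite negbK in h2; rewrite h2 in h1.
- move=> [e1 e2]; have [h|h] := Qp_im0 e2; move: e1; rewrite h => e1; lra.
- move=> [e1 _]; move: e1 (gS_re S t i.+1); rewrite /gS hj /= => e1.
  rewrite -e1 (_ : (i.+2)%:R = (i.+1)%:R + 1 :> R); last by rewrite -addn1 natrD.
  move=> /andP[a _]; lra.
- rewrite /Ntilde => -[e1]; move: e1; rewrite (_ : (i.+2)%:R = (i.+1)%:R + 1 :> R); last by rewrite -addn1 natrD.
  lra.
Qed.

Lemma cabs_ge_re (z : Cpt R) : z.1 <= cabs z.
Proof. have [h _] := coord_le z; exact: le_trans (ler_norm _) h. Qed.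

Lemma conf_gS S t : conf (gS S t).
Proof.
split.
  move=> i j ij e; case: (ltngtP i j) => h.
  - exact: gS_lt h e.
  - exact: gS_lt h (esym e).
  - exact: ij h.
move=> r r0; apply: (sub_finite_set (B := `I_(Num.truncn r).+1)); last exact: finite_II.
move=> j /= hj.
have h1 := cabs_ge_re (gS S t j); have [h2 _] := andP (gS_re S t j).
have h3 : (j.+1)%:R <= r by lra.
have : (j < Num.truncn r)%N by rewrite truncn_gt_nat.
by rewrite /= => h; apply: (ltn_trans h).
Qed.

End Constr.


Section Cont.
Context {R : realType}.

Lemma cont_eps (f : Cpt R -> R) (p : Cpt R) : continuous f ->
  forall e : R, 0 < e -> exists2 d : R, 0 < d &
    forall q : Cpt R, `|p.1 - q.1| < d -> `|p.2 - q.2| < d -> `|f p - f q| < e.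
Proof.
move=> hf e e0.
have := cvgr_dist_lt f (f p) (hf p) e e0.
move=> h; have [d d0 hd] := (nbhs_ballP _ _).1 (h _); exists d => // q h1 h2.
by apply: hd; apply/ballRR; split; apply/ballR.
Qed.

Lemma sum_cont (F : nat -> R -> R) (t : R) (M : nat) :
  (forall i, (i < M)%N -> forall e : R, 0 < e -> exists2 d : R, 0 < d &
     forall s, `|s - t| < d -> `|F i s - F i t| < e) ->
  forall e : R, 0 < e -> exists2 d : R, 0 < d & forall s, `|s - t| < d ->
    `|\sum_(0 <= i < M) F i s - \sum_(0 <= i < M) F i t| < e.
Proof.
elim: M => [|M IH] hF e e0.
  by exists 1 => // s _; rewrite !big_geq // subrr normr0.
have [d1 d10 h1] := IH (fun i iM => hF i (ltnW iM)) (e / 2) ltac:(lra).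
have [d2 d20 h2] := hF M (ltnSn M) (e / 2) ltac:(lra).
exists (Num.min d1 d2); first by rewrite lt_min d10 d20.
move=> s; rewrite lt_min => /andP[a b].
rewrite !big_nat_recr //=.
have := h1 s a; have := h2 s b.
set A := \sum_(0 <= i < M) F i s; set B := \sum_(0 <= i < M) F i t.
move=> u v.
have := ler_normD (A - B) (F M s - F M t).
rewrite (_ : A - B + (F M s - F M t) = A + F M s - (B + F M t)); last by ring.
lra.
Qed.

Definition L (i : nat) : R := 5 * 2 ^+ (i./2).+1.

Lemma L_gt0 i : 0 < L i.
Proof. by rewrite /L mulr_gt0 // exprn_gt0. Qed.

Lemma Qp_lip2 (u v : R) :
  `|(Qp u).1 - (Qp v).1| <= 5 * `|u - v| /\ `|(Qp u).2 - (Qp v).2| <= 5 * `|u - v|.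
Proof.
case: (leP u v) => h.
  have e : `|u - v| = v - u by rewrite distrC ger0_norm // subr_ge0.
  by rewrite e; exact: Qp_lip h.
have e : `|u - v| = u - v by rewrite ger0_norm // subr_ge0 ltW.
have [a b] := Qp_lip (ltW h); rewrite e (distrC (Qp u).1) (distrC (Qp u).2); split => //.
Qed.

Lemma gS_lip S s t i :
  `|(gS S s i).1 - (gS S t i).1| <= L i * `|s - t| /\
  `|(gS S s i).2 - (gS S t i).2| <= L i * `|s - t|.
Proof.
rewrite /gS; case: (mv S i) => /=; last first.
  by rewrite !subrr normr0; split; apply: mulr_ge0; [exact: ltW (L_gt0 i)| exact: normr_ge0|exact: ltW (L_gt0 i)|exact: normr_ge0].
have [a b] := Qp_lip2 (uk i./2 s) (uk i./2 t).
have e : `|uk i./2 s - uk i./2 t| = 2 ^+ (i./2).+1 * `|s - t|.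
  rewrite /uk (_ : 2 ^+ (i./2).+1 * (s - 1) + 2 - (2 ^+ (i./2).+1 * (t - 1) + 2) = 2 ^+ (i./2).+1 * (s - t)); last by ring.
  by rewrite normrM ger0_norm // exprn_ge0.
rewrite e mulrA in a b; rewrite /L.
split => //.
by rewrite (_ : (i.+2)%:R + (Qp (uk i./2 s)).1 - ((i.+2)%:R + (Qp (uk i./2 t)).1) = (Qp (uk i./2 s)).1 - (Qp (uk i./2 t)).1); last by ring.
Qed.

Lemma cabs_le (z : Cpt R) : cabs z <= `|z.1| + `|z.2|.
Proof.
rewrite /cabs -(ger0_norm (addr_ge0 (normr_ge0 z.1) (normr_ge0 z.2))) -sqrtr_sqr.
apply: ler_wsqrtr; rewrite sqrrD !real_normK ?num_real //.
by have := mulr_ge0 (normr_ge0 z.1) (normr_ge0 z.2); rewrite mulr2n; lra.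
Qed.

Lemma gS_cabs S s t i : cabs (csub (gS S s i) (gS S t i)) <= 2 * L i * `|s - t|.
Proof.
apply: le_trans (cabs_le _) _; have [a b] := gS_lip S s t i; rewrite /csub /=; lra.
Qed.

End Cont.


Section LoopG.
Context {R : realType}.

Lemma psum_gS (f : Cpt R -> R) (m : R) S t (M : nat) : supported_in m f -> m < M%:R ->
  psum f (Pset (gS S t)) = \sum_(0 <= i < M) f (gS S t i).
Proof.
move=> hf mM; rewrite /psum /Pset.
have inj : set_inj setT (gS S t).
  move=> i j _ _ e; apply: contrapT => ij; exact: (conf_gS S t).1 i j ij e.
rewrite fsbig_image // -(fsbig_widen `I_M setT) //.
  by rewrite -fsbig_ord big_mkord.
move=> i [_ /= iM]; rewrite /preimage /=; apply: hf.
have h1 := cabs_ge_re (gS S t i); have [h2 _] := andP (gS_re S t i).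
have : (M%:R : R) <= i%:R by rewrite ler_nat leqNgt; apply/negP.
rewrite -addn1 natrD in h2; lra.
Qed.

Lemma pow_small (eps : R) : 0 < eps -> exists J : nat, 2 ^- J < eps.
Proof.
move=> e0; exists (Num.truncn (eps^-1)).+1.
set J := (Num.truncn (eps^-1)).+1.
have h1 : eps^-1 < J%:R by apply: truncnS_gt.
have h2 : (J%:R : R) < 2 ^+ J by rewrite -natrX ltr_nat; apply: ltn_expl.
rewrite invf_plt ?posrE ?exprn_gt0 //; lra.
Qed.

Lemma cabs0 (x : Cpt R) : cabs (csub x x) = 0.
Proof. by rewrite /cabs /csub !subrr expr0n /= addr0 sqrtr0. Qed.

Lemma loop_gS (phi : nat -> Cpt R -> R) S : good_test_seq phi -> loop phi (Ntilde R) (gS S).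
Proof.
move=> [hCc _]; split; first by move=> t _; exact: conf_gS.
split; last by rewrite gS_0 gS_1.
move=> t ut e e0.
have [J hJ] : exists J : nat, 2 ^- J < e / 6 :> R by apply: pow_small; lra.
have [m hm] := choice (fun j => (hCc j).2).
pose M j := (Num.truncn (m j)).+1.
have mM j : m j < (M j)%:R by apply: truncnS_gt.
pose G j s := \sum_(0 <= i < M j) phi j (gS S s i).
have psG : forall j s, psum (phi j) (Pset (gS S s)) = G j s.
  by move=> j s; apply: (psum_gS (m := m j)) => //; exact: hm.
pose F1 j s := cabs (csub (gS S s j) (gS S t j)).
pose F2 j s := `|G j s - G j t|.
have c1 : forall j, (j < J)%N -> forall e : R, 0 < e -> exists2 d : R, 0 < d &
     forall s, `|s - t| < d -> `|F1 j s - F1 j t| < e.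
  move=> j _ e' e'0; exists (e' / (2 * L j)).
    by rewrite divr_gt0 //; apply: mulr_gt0 => //; exact: L_gt0.
  move=> s hs; rewrite /F1 cabs0 subr0 ger0_norm ?cabs_ge0 //.
  apply: le_lt_trans (gS_cabs S s t j) _.
  have L0 := L_gt0 j.
  have L2 : 0 < 2 * L j :> R by rewrite mulr_gt0 ?L_gt0.
  have h2 : 2 * L j * (e' / (2 * L j)) = e' by rewrite mulrC divfK // gt_eqF.
  by rewrite -h2 ltr_pM2l.
have cG : forall j e, 0 < e -> exists2 d : R, 0 < d &
     forall s, `|s - t| < d -> `|G j s - G j t| < e.
  move=> j; apply: sum_cont => i _ e' e'0.
  have [d d0 hd] := cont_eps (gS S t i) (hCc j).1 e'0.
  exists (d / L i); first by rewrite divr_gt0 // L_gt0.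
  move=> s hs; rewrite distrC; apply: hd.
  - have [a _] := gS_lip S s t i; rewrite distrC; apply: le_lt_trans a _.
    have L0 : 0 < L i :> R := L_gt0 i.
    have h2 : L i * (d / L i) = d :> R by rewrite mulrC divfK // gt_eqF.
    by rewrite -h2 ltr_pM2l.
  - have [_ a] := gS_lip S s t i; rewrite distrC; apply: le_lt_trans a _.
    have L0 : 0 < L i :> R := L_gt0 i.
    have h2 : L i * (d / L i) = d :> R by rewrite mulrC divfK // gt_eqF.
    by rewrite -h2 ltr_pM2l.
have c2 : forall j, (j < J)%N -> forall e : R, 0 < e -> exists2 d : R, 0 < d &
     forall s, `|s - t| < d -> `|F2 j s - F2 j t| < e.
  move=> j _ e' e'0; have [d d0 hd] := cG j e' e'0; exists d => // s hs.
  by rewrite /F2 subrr normr0 subr0 normr_id; exact: hd.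
have [d1 d10 h1] := sum_cont c1 (e := e / 3) ltac:(lra).
have [d2 d20 h2] := sum_cont c2 (e := e / 3) ltac:(lra).
exists (Num.min d1 d2); first by rewrite lt_min d10 d20.
move=> s _; rewrite lt_min => /andP[a b].
have u1 := h1 s a; have u2 := h2 s b.
have z1 : \sum_(0 <= i < J) F1 i t = 0.
  by rewrite big1 // => i _; rewrite /F1 cabs0.
have z2 : \sum_(0 <= i < J) F2 i t = 0.
  by rewrite big1 // => i _; rewrite /F2 subrr normr0.
rewrite z1 z2 !subr0 in u1 u2.
have := dSigma_ub phi (gS S s) (gS S t) J.
have e2 : \sum_(0 <= j < J) `|psum (phi j) (Pset (gS S s)) - psum (phi j) (Pset (gS S t))|
  = \sum_(0 <= j < J) F2 j s by apply: eq_bigr => j _; rewrite !psG.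
rewrite e2.
have n1 := ler_norm (\sum_(0 <= i < J) F1 i s).
have n2 := ler_norm (\sum_(0 <= i < J) F2 i s).
have pJ : 0 < 2 ^- J :> R by rewrite invr_gt0 exprn_gt0.
rewrite -/(F1) => hh.
lra.
Qed.

End LoopG.


Section Final.
Context {R : realType}.

Lemma row_moving (X : nat -> bool) k t : X k = true ->
  csub (gS X t k.*2 : Cpt R) (gS X t k.*2.+1) = Qp (uk k t).
Proof.
move=> Xk; rewrite /gS /mv /= odd_double /= doubleK Xk /=.
rewrite /Ntilde /csub /=; rewrite [RHS]surjective_pairing; congr (_, _).
  by ring.
by rewrite subr0.
Qed.

Lemma row_fixed (X : nat -> bool) k t : X k = false ->
  csub (gS X t k.*2 : Cpt R) (gS X t k.*2.+1) = csub (Ntilde R k.*2) (Ntilde R k.*2.+1).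
Proof.
by move=> Xk; rewrite /gS /mv /= odd_double /= doubleK Xk /=.
Qed.


Lemma uk_grid k (M j : nat) : (0 < M)%N ->
  uk k (j%:R / (2 ^ k.+1 * M)%N%:R) = j%:R / M%:R - 2 ^+ k.+1 + 2 :> R.
Proof.
move=> M0; rewrite /uk natrM natrX.
have M0' : (M%:R : R) != 0 by rewrite pnatr_eq0 -lt0n.
have P0 : (2 : R) ^+ k.+1 != 0 by rewrite expf_neq0 // pnatr_eq0.
by field; rewrite M0' P0.
Qed.

Lemma row_neg k (M : nat) : (3 <= M)%N ->
  (forall j, (j < 2 ^ k.+1 * M)%N ->
    0 < dot (Qp (uk k (j%:R / (2 ^ k.+1 * M)%N%:R)))
            (Qp (uk k (j.+1%:R / (2 ^ k.+1 * M)%N%:R))) :> R) ->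
  \sum_(0 <= j < 2 ^ k.+1 * M) delta (Qp (uk k (j%:R / (2 ^ k.+1 * M)%N%:R)))
      (Qp (uk k (j.+1%:R / (2 ^ k.+1 * M)%N%:R))) < 0 :> R.
Proof.
move=> M3 hdot.
have M0 : (0 < M)%N by apply: leq_trans M3.
have MR : 3 <= (M%:R : R) by rewrite (ler_nat R 3 M).
set N := (2 ^ k.+1 * M)%N in hdot *.
have k2 : (2 <= 2 ^ k.+1)%N by rewrite expnS leq_pmulr // expn_gt0.
have N2 : (2 * M <= N)%N by rewrite /N leq_mul2r k2 orbT.
set a := fun j => delta (Qp (uk k (j%:R / N%:R))) (Qp (uk k (j.+1%:R / N%:R))) : R.
have u_eq : forall j, uk k (j%:R / N%:R) = j%:R / M%:R - 2 ^+ k.+1 + 2 :> R.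
  by move=> j; rewrite /N uk_grid.
have ale : forall j, (j < N)%N -> a j <= 0.
  move=> j jN; apply: delta_le0; last exact: hdot.
  rewrite !u_eq; apply: Qp_cross.
    by rewrite lerD2r lerD2r ler_pM2r ?invr_gt0 ?ltr0n // ler_nat.
  rewrite -addn1 natrD mulrDl.
  have : 1 / (M%:R : R) <= 1 / 3.
    by rewrite !div1r lef_pV2 ?posrE ?ltr0n //; lra.
  rewrite mul1r; lra.
set j0 := (N - 2 * M)%N.
have j0N : (j0 < N)%N by rewrite /j0 ltn_subrL muln_gt0 M0 andbT /N muln_gt0 expn_gt0 M0.
have aj0 : a j0 < 0.
  rewrite /a; apply: delta_lt0; last exact: hdot.
  rewrite !u_eq.
  have NR : (N%:R : R) = 2 ^+ k.+1 * M%:R by rewrite /N natrM natrX.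
  have ej : (j0%:R : R) = N%:R - 2 * M%:R by rewrite /j0 natrB // natrM.
  have Mne : (M%:R : R) != 0 by rewrite pnatr_eq0 -lt0n.
  have u0 : j0%:R / M%:R - 2 ^+ k.+1 + 2 = 0 :> R.
    by rewrite ej NR; field.
  have u1 : j0.+1%:R / M%:R - 2 ^+ k.+1 + 2 = 1 / M%:R :> R.
    by rewrite -addn1 natrD ej NR; field.
  rewrite u0 u1.
  have iM0 : 0 < 1 / (M%:R : R) by rewrite div1r invr_gt0 ltr0n.
  have iM3 : 1 / (M%:R : R) <= 1 / 3.
    by rewrite !div1r lef_pV2 ?posrE ?ltr0n //; lra.
  rewrite /Qp lexx /= (_ : (1 / M%:R <= 0) = false); last by apply/negbTE; rewrite -ltNge.
  rewrite iM3 /cross /=; lra.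
rewrite (big_cat_nat (leq0n j0) (ltnW j0N)) /=. rewrite [in X in _ + X]big_ltn; last exact: j0N.
have s1 : \sum_(0 <= j < j0) a j <= 0.
  rewrite big_nat; apply: sumr_le0 => j /andP[_ h]; apply: ale; exact: ltn_trans h j0N.
have s2 : \sum_(j0.+1 <= j < N) a j <= 0.
  rewrite big_nat; apply: sumr_le0 => j /andP[_ h]; exact: ale.
move: s1 s2 aj0; rewrite /a /= => s1 s2 aj0; lra.
Qed.


Lemma near_dot (a b : Cpt R) : near2 a b -> 0 < dot a b.
Proof. by move=> h; apply: le_lt_trans h. Qed.

Lemma no_hom (phi : nat -> Cpt R -> R) (X Y : nat -> bool) k : X k != Y k ->
  loop_homotopic phi (Ntilde R) (gS X) (gS Y) -> False.
Proof.
move=> XY [H [Hconf [Hcont [H0 [H1 Hb]]]]].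
have pq : k.*2 <> k.*2.+1 by move=> e; have := congr1 odd e; rewrite /= odd_double.
have hne : forall s t, unitI s -> unitI t -> H s t k.*2 <> H s t k.*2.+1.
  by move=> s t us ut; apply: (Hconf s t us ut).1.
have [d d0 hd] := hom_near hne Hcont.
pose M := (Num.truncn d^-1).+3.
have M3 : (3 <= M)%N by [].
have Md : (M%:R : R)^-1 < d.
  have h1 := truncnS_gt (d^-1).
  have h2 : ((Num.truncn d^-1).+1%:R : R) <= M%:R by rewrite ler_nat /M; lia.
  rewrite invf_plt ?posrE ?ltr0n //; lra.
pose N := (2 ^ k.+1 * M)%N.
have N0 : (0 < N)%N by rewrite muln_gt0 expn_gt0.
have MN : (M <= N)%N by rewrite leq_pmull // expn_gt0.
pose tt (j : nat) : R := j%:R / N%:R.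
have NR0 : (0:R) < N%:R by rewrite ltr0n.
have utt : forall j, (j <= N)%N -> unitI (tt j).
  move=> j jN; rewrite /unitI /tt; apply/andP; split; first by rewrite divr_ge0.
  by rewrite ler_pdivrMr // mul1r ler_nat.
have dtt : forall j, `|tt j.+1 - tt j| < d.
  move=> j; rewrite /tt -mulrBl (_ : (j.+1%:R - j%:R : R) = 1); last first.
    by rewrite -addn1 natrD; ring.
  rewrite mul1r ger0_norm ?invr_ge0 ?ler0n //.
  apply: le_lt_trans Md; rewrite lef_pV2 ?posrE ?ltr0n ?ler_nat //.
have dtt' : forall j, `|tt j - tt j.+1| < d by move=> j; rewrite distrC.
have dtt0 : forall j, `|tt j - tt j| < d by move=> j; rewrite subrr normr0.
pose F i j := csub (H (tt i) (tt j) k.*2) (H (tt i) (tt j) k.*2.+1).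
have hv : forall i j, (i < N)%N -> (j <= N)%N -> near2 (F i j) (F i.+1 j).
  by move=> i j iN jN; apply: hd; rewrite ?dtt' ?dtt0 //; apply: utt => //; apply: ltnW.
have hh : forall i j, (i <= N)%N -> (j < N)%N -> near2 (F i j) (F i j.+1).
  by move=> i j iN jN; apply: hd; rewrite ?dtt' ?dtt0 //; apply: utt => //; apply: ltnW.
have tt0 : tt 0 = 0 by rewrite /tt mul0r.
have ttN : tt N = 1 by rewrite /tt divff // gt_eqF.
set c := csub (Ntilde R k.*2) (Ntilde R k.*2.+1).
have hc : forall i, (i <= N)%N -> F i 0%N = c /\ F i N = c.
  by move=> i iN; have [a b] := Hb (tt i) (utt i iN); rewrite /F tt0 ttN a b.
have G := grid hv hh hc.
have R0 : forall j, (j <= N)%N -> F 0%N j = csub (gS X (tt j) k.*2) (gS X (tt j) k.*2.+1).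
  by move=> j jN; rewrite /F tt0 H0 //; apply: utt.
have RN : forall j, (j <= N)%N -> F N j = csub (gS Y (tt j) k.*2) (gS Y (tt j) k.*2.+1).
  by move=> j jN; rewrite /F ttN H1 //; apply: utt.
have e0 : \sum_(0 <= j < N) delta (F 0%N j) (F 0%N j.+1) =
  \sum_(0 <= j < N) delta (csub (gS X (tt j) k.*2) (gS X (tt j) k.*2.+1))
                          (csub (gS X (tt j.+1) k.*2) (gS X (tt j.+1) k.*2.+1)).
  by apply: eq_big_nat => j /andP[_ jN]; rewrite !R0 // ltnW.
have eN : \sum_(0 <= j < N) delta (F N j) (F N j.+1) =
  \sum_(0 <= j < N) delta (csub (gS Y (tt j) k.*2) (gS Y (tt j) k.*2.+1))
                          (csub (gS Y (tt j.+1) k.*2) (gS Y (tt j.+1) k.*2.+1)).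
  by apply: eq_big_nat => j /andP[_ jN]; rewrite !RN // ltnW.
have nX : forall j, (j < N)%N -> near2 (csub (gS X (tt j) k.*2) (gS X (tt j) k.*2.+1))
                          (csub (gS X (tt j.+1) k.*2) (gS X (tt j.+1) k.*2.+1)).
  by move=> j jN; rewrite -!R0 //; [apply: hh | apply: ltnW].
have nY : forall j, (j < N)%N -> near2 (csub (gS Y (tt j) k.*2) (gS Y (tt j) k.*2.+1))
                          (csub (gS Y (tt j.+1) k.*2) (gS Y (tt j.+1) k.*2.+1)).
  by move=> j jN; rewrite -!RN //; [apply: hh | apply: ltnW].
rewrite e0 eN in G.
have mov : forall Z : nat -> bool, Z k = true ->
  (forall j, (j < N)%N -> near2 (csub (gS Z (tt j) k.*2) (gS Z (tt j) k.*2.+1))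
                          (csub (gS Z (tt j.+1) k.*2) (gS Z (tt j.+1) k.*2.+1))) ->
  \sum_(0 <= j < N) delta (csub (gS Z (tt j) k.*2) (gS Z (tt j) k.*2.+1))
                          (csub (gS Z (tt j.+1) k.*2) (gS Z (tt j.+1) k.*2.+1)) < 0.
  move=> Z Zk nZ.
  rewrite (eq_big_nat _ _ (F2 := fun j => delta (Qp (uk k (tt j))) (Qp (uk k (tt j.+1))))); last first.
    by move=> j _; rewrite !row_moving.
  apply: (row_neg M3) => j jN.
  by have := near_dot (nZ j jN); rewrite !row_moving.
have fix0 : forall Z : nat -> bool, Z k = false ->
  \sum_(0 <= j < N) delta (csub (gS Z (tt j) k.*2) (gS Z (tt j) k.*2.+1))
                          (csub (gS Z (tt j.+1) k.*2) (gS Z (tt j.+1) k.*2.+1)) = 0.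
  move=> Z Zk; rewrite big1 // => j _; rewrite !row_fixed //; exact: delta_aa.
move: XY; case hX : (X k); case hY : (Y k) => // _.
- by have := mov X hX nX; rewrite G fix0 // ltxx.
- by have := mov Y hY nY; rewrite -G fix0 // ltxx.
Qed.

End Final.


Lemma loop_refl (R : realType) (phi : nat -> Cpt R -> R) b g :
  loop phi b g -> loop_homotopic phi b g g.
Proof.
move=> [hconf [hc [h0 h1]]]; exists (fun _ t => g t); split.
  by move=> s t _ ut; exact: hconf.
split.
  move=> s t us ut e e0; have [d d0 hd] := hc t ut e e0.
  by exists d => // s' t' _ ut' _ htt; exact: hd.
split; first by [].
split; first by [].
by move=> s _; split.
Qed.

Theorem mainTheorem5 (R : realType) (phi : nat -> Cpt R -> R) :
  good_test_seq phi -> ~ countable (pi1 phi (Ntilde R)).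
Proof.
move=> hphi /countable_injP [f finj].
pose cls (X : nat -> bool) := [set h | loop phi (Ntilde R) h /\
   loop_homotopic phi (Ntilde R) (gS X) h].
have inP : forall X, pi1 phi (Ntilde R) (cls X).
  by move=> X; exists (gS X) => //; exact: loop_gS.
have clsinj : forall X Y, cls X = cls Y -> X = Y.
  move=> X Y e; apply/funext => k; apply/eqP; apply: contraT => hk.
  have : cls X (gS Y) by rewrite e; split; [exact: loop_gS|apply: loop_refl; exact: loop_gS].
  by case=> _ hXY; case: (no_hom hk hXY).
pose g X := f (cls X).
have ginj : forall X Y, g X = g Y -> X = Y.
  move=> X Y e; apply: clsinj; apply: finj => //; rewrite inE; exact: inP.
pose D (n : nat) : bool := ~~ `[< exists X, g X = n /\ X n >].
case hD : (D (g D)).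
  move: (hD); rewrite {1}/D => /negP; apply; apply/asboolP.
  by exists D; split.
move: (hD); rewrite {1}/D => /negbFE /asboolP [X [e hX]].
have eX := ginj _ _ e; rewrite eX in hX.
by rewrite hX in hD.
Qed.
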